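(* Let $M\colon\mathbb{R}^2\to\mathbf{Vec}$ be a persistence module such that for every $(i,j)\in\mathbb{Z}^2$ the restriction $M|_{[i,i+1]\times[j,j+1]}$ is middle exact. Then $M$ is middle exact.
   Context: $\mathbb{R}^2$ and its subsets carry the product order. A module $M$ over $Q\subseteq\mathbb{R}^2$ is middle exact if for all $x\le x'$, $y\le y'$ with $a=(x,y),b=(x,y'),c=(x',y),d=(x',y')$ all in $Q$, the sequence $M_a\xrightarrow{(M(a\le b),M(a\le c))}M_b\oplus M_c\xrightarrow{M(b\le d)-M(c\le d)}M_d$ is exact at the middle. *)

(* Defs.v *)
From Stdlib Require Import Reals ZArith.
From HB Require Import structures.
From mathcomp Require Import all_boot all_order all_algebra.
Set Implicit Arguments. Unset Strict Implicit. Unset Printing Implicit Defensive.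
Import GRing.Theory.

Definition le2 (p q : R * R) : Prop := Rle (fst p) (fst q) /\ Rle (snd p) (snd q).

Record pmod (K : fieldType) := PMod {
  pm_sp : R * R -> lmodType K;
  pm_map : forall p q : R * R, le2 p q -> {linear pm_sp p -> pm_sp q};
  pm_id : forall p (h : le2 p p) (v : pm_sp p), pm_map h v = v;
  pm_comp : forall p q r (h1 : le2 p q) (h2 : le2 q r) (h3 : le2 p r)
              (v : pm_sp p), pm_map h2 (pm_map h1 v) = pm_map h3 v
}.

(* Middle exactness of M restricted to Q \subseteq R^2:
   for x <= x', y <= y' with a=(x,y), b=(x,y'), c=(x',y), d=(x',y') in Q, the
   sequence M_a -> M_b (+) M_c -> M_d (second map (u,v) |-> M(b<=d)u - M(c<=d)v)
   is exact at M_b (+) M_c, i.e. kernel = image. *)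
Definition middle_exact_on (K : fieldType) (M : pmod K) (Q : R * R -> Prop) : Prop :=
  forall (x x' y y' : R) (hx : Rle x x') (hy : Rle y y'),
    Q (x, y) -> Q (x, y') -> Q (x', y) -> Q (x', y') ->
    forall (hab : le2 (x, y) (x, y')) (hac : le2 (x, y) (x', y))
           (hbd : le2 (x, y') (x', y')) (hcd : le2 (x', y) (x', y')),
    (forall w : pm_sp M (x, y),
        (pm_map M hbd (pm_map M hab w) - pm_map M hcd (pm_map M hac w))%R = 0%R) /\
    (forall (u : pm_sp M (x, y')) (v : pm_sp M (x', y)),
        (pm_map M hbd u - pm_map M hcd v)%R = 0%R ->
        exists w : pm_sp M (x, y), pm_map M hab w = u /\ pm_map M hac w = v).

Definition middle_exact (K : fieldType) (M : pmod K) : Prop :=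
  middle_exact_on M (fun _ => True).

Definition unit_square (i j : Z) (p : R * R) : Prop :=
  Rle (IZR i) (fst p) /\ Rle (fst p) (IZR i + 1) /\
  Rle (IZR j) (snd p) /\ Rle (snd p) (IZR j + 1).

(* Main.v *)
Require Import Defs.
From Stdlib Require Import Reals ZArith.
From mathcomp Require Import all_boot all_order all_algebra.
From Stdlib Require Import Lra.
Import GRing.Theory.
Local Open Scope R_scope.

Lemma up_int (z : Z) : up (IZR z) = Z.add z 1.
Proof.
  symmetry; apply up_tech; [apply Rle_refl|]. rewrite plus_IZR. lra.
Qed.

Lemma subdiv (P : R -> R -> Prop) :
  (forall a b, Rle a b -> (exists i, Rle (IZR i) a /\ Rle b (IZR i + 1)) -> P a b) ->
  (forall a b c, Rle a b -> Rle b c -> P a b -> P b c -> P a c) ->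
  forall a b, Rle a b -> P a b.
Proof.
  intros Hb Ht.
  assert (base : forall a b, Rle a b -> Rle b (IZR (up a)) -> P a b).
  { intros a b Hab Hb2. apply Hb; auto. exists (Z.sub (up a) 1).
    destruct (archimed a) as [H1 H2]. rewrite minus_IZR. lra. }
  assert (ind : forall n a b, Rle a b -> Rle b (IZR (up a) + INR n) -> P a b).
  { induction n as [|n IH]; intros a b Hab Hb2.
    - simpl in Hb2. apply base; lra.
    - destruct (Rle_dec b (IZR (up a))) as [Hle|Hlt].
      + apply base; lra.
      + destruct (archimed a) as [H1 H2].
        apply (Ht a (IZR (up a)) b); try lra.
        * apply base; lra.
        * apply IH; [lra|]. rewrite up_int plus_IZR. rewrite S_INR in Hb2. lra. }
  intros a b Hab. destruct (INR_unbounded (b - IZR (up a))) as [n Hn].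
  apply (ind n); lra.
Qed.

Local Close Scope R_scope.
Section S.
Variable K : fieldType.
Variable M : pmod K.

Lemma pm_irr p q (h h' : le2 p q) v : pm_map M h v = pm_map M h' v.
Proof.
  have hqq : le2 q q by split; apply Rle_refl.
  rewrite -(pm_comp h hqq h'). by rewrite pm_id.
Qed.

Lemma le2_trans p q r : le2 p q -> le2 q r -> le2 p r.
Proof. move=> [? ?] [? ?]; split; eapply Rle_trans; eauto. Qed.

Lemma pm_comp' p q r (h1 : le2 p q) (h2 : le2 q r) (h3 : le2 p r) v :
  pm_map M h2 (pm_map M h1 v) = pm_map M h3 v.
Proof. exact: pm_comp. Qed.

Arguments pm_comp' {p q r}.
Arguments pm_irr {p q}.
Definition WP x x' y y' :=
  forall (hab : le2 (x, y) (x, y')) (hac : le2 (x, y) (x', y))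
         (hbd : le2 (x, y') (x', y')) (hcd : le2 (x', y) (x', y'))
         (u : pm_sp M (x, y')) (v : pm_sp M (x', y)),
    pm_map M hbd u = pm_map M hcd v ->
    exists w : pm_sp M (x, y), pm_map M hab w = u /\ pm_map M hac w = v.

Lemma hpaste x0 x1 x2 y y' : Rle x0 x1 -> Rle x1 x2 -> Rle y y' ->
  WP x0 x1 y y' -> WP x1 x2 y y' -> WP x0 x2 y y'.
Proof.
  move=> h01 h12 hy A B hab hac hbd hcd u v E.
  have hr : forall r, Rle r r by move=> r; apply Rle_refl.
  have h1 : le2 (x0, y') (x1, y') by split.
  have hab' : le2 (x1, y) (x1, y') by split.
  have hac' : le2 (x1, y) (x2, y) by split.
  have hbd' : le2 (x1, y') (x2, y') by split.
  have [w1 [Hw1a Hw1b]] := B hab' hac' hbd' hcd (pm_map M h1 u) v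
       ltac:(by rewrite (pm_comp' _ _ hbd)).
  have habA : le2 (x0, y) (x0, y') by split.
  have hacA : le2 (x0, y) (x1, y) by split.
  have [w [Hwa Hwb]] := A habA hacA h1 hab' u w1 ltac:(by rewrite Hw1a).
  exists w; split; first by rewrite (pm_irr hab habA).
  by rewrite -(pm_comp' hacA hac') Hwb.
Qed.

Lemma vpaste x x' y0 y1 y2 : Rle x x' -> Rle y0 y1 -> Rle y1 y2 ->
  WP x x' y0 y1 -> WP x x' y1 y2 -> WP x x' y0 y2.
Proof.
  move=> hx h01 h12 A B hab hac hbd hcd u v E.
  have h1 : le2 (x', y0) (x', y1) by split; [apply Rle_refl|].
  have hab' : le2 (x, y1) (x, y2) by split; [apply Rle_refl|].
  have hac' : le2 (x, y1) (x', y1) by split; [|apply Rle_refl].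
  have hcd' : le2 (x', y1) (x', y2) by split; [apply Rle_refl|].
  have [w1 [Hw1a Hw1b]] := B hab' hac' hbd hcd' u (pm_map M h1 v)
       ltac:(by rewrite (pm_comp' _ _ hcd)).
  have habA : le2 (x, y0) (x, y1) by split; [apply Rle_refl|].
  have hacA : le2 (x, y0) (x', y0) by split; [|apply Rle_refl].
  have [w [Hwa Hwb]] := A habA hacA hac' h1 w1 v ltac:(by rewrite Hw1b).
  exists w; split; last by rewrite (pm_irr hac hacA).
  by rewrite -(pm_comp' habA hab') Hwa.
Qed.

End S.

Theorem lemma5p10 (K : fieldType) (M : pmod K) :
  (forall i j : Z, middle_exact_on M (unit_square i j)) ->
  middle_exact M.
Proof.
  move=> H.
  have H1 : forall x x' y y' i j, Rle (IZR i) x -> Rle x x' -> Rle x' (IZR i + 1) ->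
      Rle (IZR j) y -> Rle y y' -> Rle y' (IZR j + 1) -> @WP K M x x' y y'.
  { move=> x x' y y' i j ? ? ? ? ? ? hab hac hbd hcd u v E.
    have [_ H2] := H i j x x' y y' ltac:(auto) ltac:(auto)
      ltac:(rewrite /unit_square /=; lra) ltac:(rewrite /unit_square /=; lra)
      ltac:(rewrite /unit_square /=; lra) ltac:(rewrite /unit_square /=; lra)
      hab hac hbd hcd.
    apply: H2. by rewrite E subrr. }
  have H2 : forall y y' j, Rle (IZR j) y -> Rle y y' -> Rle y' (IZR j + 1) ->
      forall x x', Rle x x' -> @WP K M x x' y y'.
  { move=> y y' j ? ? ?.
    apply: (@subdiv (fun a b => @WP K M a b y y')).
    - move=> a b ? [i [? ?]]. apply: (H1 a b y y' i j) => //; lra.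
    - move=> a b c ? ? ? ?. apply: (@hpaste K M _ b) => //. }
  have H3 : forall y y', Rle y y' -> forall x x', Rle x x' -> @WP K M x x' y y'.
  { move=> y y' hy x x' hx.
    apply: (@subdiv (fun a b => @WP K M x x' a b)) hy.
    - move=> a b ? [j [? ?]]. apply: (H2 a b j) => //; lra.
    - move=> a b c ? ? ? ?. apply: (@vpaste K M _ _ _ b) => //. }
  move=> x x' y y' hx hy _ _ _ _ hab hac hbd hcd; split.
  - move=> w. have hd : le2 (x, y) (x', y') by split.
    by rewrite (@pm_comp' K M _ _ _ hab hbd hd) (@pm_comp' K M _ _ _ hac hcd hd) subrr.
  - move=> u v E. apply: (H3 y y' hy x x' hx hab hac hbd hcd u v).
    by apply/eqP; rewrite -subr_eq0; apply/eqP.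
Qed.
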